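(* Let $a,n,r\in\mathbb{N}$ (so $r\ge1$), $k_1,\ldots,k_n\in\mathbb{N}$, and let $f_1,\ldots,f_n$ be arbitrary arithmetic functions. Then $$\frac{1}{K^{ar}}\sum_{j=1}^{K^a} j^r\prod_{i=1}^n\Bigl(\sum_{d_i|k_i,\ d_i^a|j}(f_i*\mu)(d_i)\Bigr)=\frac12\prod_{i=1}^n f_i(k_i)+\frac{1}{r+1}\sum_{m=0}^{\lfloor r/2\rfloor}\binom{r+1}{2m}\frac{B_{2m}}{K^{a(2m-1)}}\sum_{d_1|k_1,\ldots,d_n|k_n}\bigl(\operatorname{lcm}(d_1,\ldots,d_n)\bigr)^{a(2m-1)}\prod_{i=1}^n (f_i*\mu)(d_i).$$
   Context: An arithmetic function is a map $\mathbb{N}\to\mathbb{C}$; $\mu$ is the Möbius function and $(f*g)(n)=\sum_{d|n}f(d)g(n/d)$ the Dirichlet convolution. $K=\operatorname{lcm}(k_1,\ldots,k_n)$. The Bernoulli numbers $B_m$ are defined by $\frac{t}{e^t-1}=\sum_{m\ge0}B_m\frac{t^m}{m!}$. *)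

(* Defs.v *)
From HB Require Import structures.
From mathcomp Require Import all_boot all_order all_algebra.
Set Implicit Arguments. Unset Strict Implicit. Unset Printing Implicit Defensive.
Import Order.TTheory GRing.Theory Num.Theory.
Local Open Scope ring_scope.

(* Möbius function on positive integers (value 0 at n = 0, irrelevant). *)
Definition moebius (C : nzRingType) (n : nat) : C :=
  if (0 < n)%N && all (fun p => logn p n == 1%N) (primes n)
  then (-1) ^+ size (primes n) else 0.

Definition dconv (C : nzRingType) (f g : nat -> C) (n : nat) : C :=
  \sum_(d <- divisors n) f d * g (n %/ d)%N.

(* Bernoulli numbers with t/(e^t-1) = sum B_m t^m/m!, i.e. B_0 = 1 and
   sum_{k=0}^{m} C(m+1,k) B_k = 0 for m >= 1 (so B_1 = -1/2). *)
Definition bern_next (s : seq rat) : rat :=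
  let m := size s in
  if m == 0%N then 1
  else - (m.+1%:R)^-1 * \sum_(k < m) ('C(m.+1, k))%:R * nth 0 s k.

Fixpoint bern_seq (n : nat) : seq rat :=
  match n with
  | 0 => [::]
  | n'.+1 => rcons (bern_seq n') (bern_next (bern_seq n'))
  end.

Definition bernoulli (m : nat) : rat := nth 0 (bern_seq m.+1) m.

Definition lcm_fam (n : nat) (k : 'I_n -> nat) : nat := \big[lcmn/1%N]_(i < n) k i.

(* Main.v *)
Require Import Defs.
From HB Require Import structures.
From mathcomp Require Import all_boot all_order all_algebra.
From mathcomp Require Import zify ring lra.
Import Order.TTheory GRing.Theory Num.Theory.

Lemma gcdn_expn a x y : gcdn (x ^ a) (y ^ a) = (gcdn x y) ^ a.
Proof.
have [->|x0] := posnP x.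
  case: a => [|a]; first by rewrite !expn0 gcdnn.
  by rewrite exp0n // !gcd0n.
have [->|y0] := posnP y.
  case: a => [|a]; first by rewrite !expn0 gcdnn.
  by rewrite exp0n // !gcdn0.
have g0 : (0 < gcdn x y)%N by rewrite gcdn_gt0 x0.
have e1 := divnK (dvdn_gcdl x y); have e2 := divnK (dvdn_gcdr x y).
set g := gcdn x y in e1 e2 g0 *.
rewrite -e1 -e2 !expnMn -muln_gcdl.
have /eqP -> : coprime ((x %/ gcdn x y)^a) ((y %/ gcdn x y)^a).
  rewrite coprimeXl // coprimeXr //; apply/eqP/eqP.
  by rewrite -(eqn_pmul2r g0) muln_gcdl e1 e2 mul1n.
by rewrite mul1n.
Qed.

Lemma lcmn_expn a x y : lcmn x y ^ a = lcmn (x ^ a) (y ^ a).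
Proof.
have [->|x0] := posnP x.
  case: a => [|a]; first by rewrite !expn0 lcm1n.
  by rewrite exp0n // !lcm0n exp0n.
have [->|y0] := posnP y.
  case: a => [|a]; first by rewrite !expn0 lcm1n.
  by rewrite exp0n // !lcmn0 exp0n.
have g0 : (0 < gcdn x y ^ a)%N by rewrite expn_gt0 gcdn_gt0 x0.
apply/eqP; rewrite -(eqn_pmul2r g0) -{2}gcdn_expn muln_lcm_gcd -expnMn.
by rewrite muln_lcm_gcd expnMn.
Qed.

Lemma biglcm_expn n (F : 'I_n -> nat) a :
  (\big[lcmn/1%N]_(i < n) F i) ^ a = \big[lcmn/1%N]_(i < n) (F i ^ a).
Proof.
by apply: (big_morph (fun x => x ^ a)); [move=> x y; apply: lcmn_expn|apply: exp1n].
Qed.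

Lemma lcm_fam_dvd n (F : 'I_n -> nat) a j :
  (lcm_fam F ^ a %| j) = [forall i, F i ^ a %| j].
Proof.
rewrite /lcm_fam biglcm_expn; apply/dvdn_biglcmP/forallP => [H i|H i _]; exact: H.
Qed.

Lemma bin_swap n m j : (j <= n)%N ->
  'C(n, m) * 'C(n - m, j) = 'C(n, j) * 'C(n - j, m).
Proof.
move=> jn.
case: (leqP m (n - j)) => mnj; last first.
  rewrite [X in _ = _ * X]bin_small // muln0.
  case: (leqP m n) => mn; last by rewrite bin_small.
  by rewrite [X in _ * X = _](@bin_small (n - m)) ?muln0 //; lia.
have mn : (m <= n)%N by lia.
have f0 : (0 < m`! * j`! * (n - m - j)`!)%N by rewrite !muln_gt0 !fact_gt0.
apply/eqP; rewrite -(eqn_pmul2r f0); apply/eqP.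
have e1 : ('C(n, m) * 'C(n - m, j) * (m`! * j`! * (n - m - j)`!) = n`!)%N.
  rewrite -(bin_fact mn) -(@bin_fact (n - m) j); last by lia.
  ring.
have e2 : ('C(n, j) * 'C(n - j, m) * (m`! * j`! * (n - m - j)`!) = n`!)%N.
  rewrite -(bin_fact jn) -(@bin_fact (n - j) m) //.
  have -> : (n - j - m = n - m - j)%N by lia.
  ring.
by rewrite e1 e2.
Qed.

Local Open Scope ring_scope.

Lemma sum_mult_range (R : nmodType) q M (F : nat -> R) : (0 < q)%N ->
  \sum_(0 <= j < q * M | (q %| j)%N) F j = \sum_(0 <= t < M) F (q * t)%N.
Proof.
move=> q0; elim: M => [|M IH]; first by rewrite muln0 !big_geq.
rewrite mulnS addnC (big_cat_nat _ (leq_addr _ _)) //= IH big_nat_recr //=.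
congr (_ + _).
have lt : (q * M < q * M + q)%N by rewrite -[X in (X < _)%N]addn0 ltn_add2l.
rewrite big_ltn_cond // dvdn_mulr // big_nat_cond big1 ?addr0 //.
move=> j /andP[/andP[h1 h2] hq].
have ip : (0 < j - q * M)%N by rewrite subn_gt0.
move: hq; rewrite -(subnKC (ltnW h1)) dvdn_addr ?dvdn_mulr // => /(dvdn_leq ip).
move: h2; rewrite -{1}(subnKC (ltnW h1)) ltn_add2l => h2.
by rewrite leqNgt h2.
Qed.

Lemma divisors_sum (R : nmodType) k B (P : pred nat) (F : nat -> R) :
  (0 < k)%N -> (k < B)%N ->
  \sum_(d <- divisors k | P d) F d = \sum_(0 <= d < B | (d %| k)%N && P d) F d.
Proof.
move=> k0 kB.
rewrite -big_filter_cond; apply: perm_big.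
apply: uniq_perm; first exact: divisors_uniq.
  by rewrite filter_uniq // iota_uniq.
move=> d; rewrite mem_filter mem_index_iota -dvdn_divisors //.
case hd: (d %| k)%N => //=.
by rewrite (leq_ltn_trans (dvdn_leq k0 hd) kB).
Qed.

Lemma moebius1 (C : nzRingType) : moebius C 1 = 1.
Proof. by rewrite /moebius /=. Qed.

Lemma moebius_pM (C : nzRingType) p t : prime p -> (0 < t)%N ->
  moebius C (p * t) = if (p %| t)%N then 0 else - moebius C t.
Proof.
move=> pp t0; have p0 := prime_gt0 pp.
have pt0 : (0 < p * t)%N by rewrite muln_gt0 p0.
rewrite /moebius pt0 t0 /=.
have lpt : logn p (p * t) = (1 + logn p t)%N by rewrite lognM // logn_prime // eqxx.
case pdt: (p %| t)%N.
  have pin : p \in primes (p * t) by rewrite mem_primes pp pt0 dvdn_mulr.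
  case: allP => // H; have := H p pin; rewrite lpt.
  have : (0 < logn p t)%N by rewrite logn_gt0 mem_primes pp t0 pdt.
  by case: (logn p t).
have {pdt} pdt : ~~ (p %| t)%N by rewrite pdt.
have pnin : p \notin primes t by rewrite mem_primes pp t0 pdt.
have pe : perm_eq (primes (p * t)) (p :: primes t).
  apply: uniq_perm; first exact: primes_uniq.
    by rewrite /= pnin primes_uniq.
  by move=> q; rewrite primesM // primes_prime // !in_cons in_nil orbF.
rewrite (perm_all _ pe) (perm_size pe) /= lpt.
have -> : logn p t = 0%N by apply/eqP; rewrite -leqn0 leqNgt logn_gt0.
rewrite eqxx /=.
have -> : all (fun q => logn q (p * t) == 1%N) (primes t) =
          all (fun q => logn q t == 1%N) (primes t).
  apply: eq_in_all => q qin; rewrite lognM // logn_prime //.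
  suff /negbTE -> : q != p by [].
  by apply: contraNneq pnin => <-.
by case: ifP; rewrite ?oppr0 // exprS mulN1r.
Qed.

Lemma sum_range_ext (R : nmodType) A B (P : pred nat) (F : nat -> R) :
  (forall u, P u -> u < A)%N -> (forall u, P u -> u < B)%N ->
  \sum_(0 <= u < A | P u) F u = \sum_(0 <= u < B | P u) F u.
Proof.
wlog AB : A B / (A <= B)%N.
  move=> H hA hB; case: (leqP A B) => h; first exact: H.
  by symmetry; apply: H => //; apply: ltnW.
move=> hA _; rewrite (big_nat_widen _ _ _ _ _ AB); apply: eq_bigl => u.
by case hu: (P u) => //=; rewrite hA.
Qed.

Lemma divisors_sum0 (R : nmodType) k B (F : nat -> R) :
  (0 < k)%N -> (k < B)%N ->
  \sum_(d <- divisors k) F d = \sum_(0 <= d < B | (d %| k)%N) F d.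
Proof.
move=> k0 kB; rewrite (@divisors_sum _ _ B xpredT) //; apply: eq_bigl => d.
by rewrite andbT.
Qed.

Lemma moebius_sum (C : nzRingType) m : (0 < m)%N ->
  \sum_(u <- divisors m) moebius C u = (m == 1%N)%:R.
Proof.
move=> m0; case: (ltngtP m 1) => [|m1|->]; first by rewrite ltnS leqn0 => /eqP m00; rewrite m00 in m0.
  2: by rewrite /divisors /= big_cons big_nil moebius1 addr0.
set p := pdiv m; have pp : prime p := pdiv_prime m1.
have p0 := prime_gt0 pp.
have pm : (p %| m)%N := pdiv_dvd m.
set m' := (m %/ p)%N.
have em : m = (m' * p)%N by rewrite divnK.
have m'0 : (0 < m')%N by rewrite divn_gt0 // dvdn_leq.
have m'm : (m' <= m)%N by rewrite em leq_pmulr.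
rewrite (@divisors_sum0 _ m m.+1) // (bigID (fun u => p %| u)%N) /=.
set X := \sum_(0 <= u < m'.+1 | (u %| m')%N && ~~ (p %| u)%N) moebius C u.
have -> : \sum_(0 <= i < m.+1 | (i %| m)%N && ~~ (p %| i)%N) moebius C i = X.
  rewrite /X; rewrite (@eq_bigl _ _ _ _ _ _ (fun u => (u %| m')%N && ~~ (p %| u)%N)).
    apply: sum_range_ext => u /andP[h _]; rewrite ltnS.
      exact: leq_trans (dvdn_leq m'0 h) m'm.
    exact: dvdn_leq.
  move=> u; case pu: (p %| u)%N; rewrite ?andbF ?andbT //.
  have cu : coprime u p by rewrite coprime_sym prime_coprime // pu.
  by rewrite em Gauss_dvdl.
suff -> : \sum_(0 <= i < m.+1 | (i %| m)%N && (p %| i)%N) moebius C i = - X.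
  by rewrite addNr.
rewrite (@eq_bigl _ _ _ _ _ _ (fun u => (p %| u)%N && (u %| m)%N)); last first.
  by move=> u; rewrite andbC.
rewrite (@sum_range_ext _ _ (p * m'.+1)%N); last first.
    move=> u /andP[_ h]; apply: (leq_ltn_trans (dvdn_leq m0 h)).
    rewrite {1}em; nia.
  by move=> u /andP[_ h]; rewrite ltnS dvdn_leq.
rewrite big_mkcondr sum_mult_range //.
rewrite /X -sumrN [RHS]big_mkcond /=; apply: eq_bigr => t _.
rewrite em [(m' * p)%N]mulnC dvdn_pmul2l //.
case tm: (t %| m')%N => //=.
have t0 : (0 < t)%N := dvdn_gt0 m'0 tm.
rewrite moebius_pM //; by case: (p %| t)%N; rewrite ?oppr0.
Qed.

Lemma moebius_inv (C : nzRingType) (f : nat -> C) k : (0 < k)%N ->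
  \sum_(d <- divisors k) dconv f (@moebius C) d = f k.
Proof.
move=> k0; rewrite (@divisors_sum0 _ k k.+1) //.
have step1 : forall d, (d %| k)%N -> dconv f (@moebius C) d =
    \sum_(0 <= e < k.+1) (if (e %| d)%N then f e * moebius C (d %/ e) else 0).
  move=> d dk; rewrite /dconv (@divisors_sum0 _ d k.+1) ?(dvdn_gt0 k0) //.
    by rewrite big_mkcond.
  by rewrite ltnS dvdn_leq.
rewrite (eq_bigr _ step1) exchange_big /=.
have step2 : forall e,
  \sum_(0 <= d < k.+1 | (d %| k)%N) (if (e %| d)%N then f e * moebius C (d %/ e) else 0)
  = if (e %| k)%N then f e * ((k %/ e)%N == 1%N)%:R else 0.
  move=> e; rewrite -big_mkcondr.
  case ek: (e %| k)%N; last first.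
    rewrite big_pred0 // => d; apply/negP => /andP[dk ed].
    by rewrite (dvdn_trans ed dk) in ek.
  have e0 : (0 < e)%N := dvdn_gt0 k0 ek.
  set k' := (k %/ e)%N.
  have ek' : k = (e * k')%N by rewrite mulnC divnK.
  have k'0 : (0 < k')%N by rewrite divn_gt0 // dvdn_leq.
  rewrite (@eq_bigl _ _ _ _ _ _ (fun d => (e %| d)%N && (d %| k)%N)); last first.
    by move=> d; rewrite andbC.
  rewrite (@sum_range_ext _ _ (e * k'.+1)%N); last first.
      move=> u /andP[_ h]; apply: (leq_ltn_trans (dvdn_leq k0 h)).
      rewrite {1}ek'; nia.
    by move=> u /andP[_ h]; rewrite ltnS dvdn_leq.
  rewrite big_mkcondr sum_mult_range // -moebius_sum //.
  rewrite (@divisors_sum0 _ k' k'.+1) // big_distrr [RHS]big_mkcond /=.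
  apply: eq_bigr => t _; rewrite {1}ek' dvdn_pmul2l //.
  by case: (t %| k')%N; rewrite // mulKn.
rewrite (eq_bigr _ (fun e _ => step2 e)).
have kin : k \in index_iota 0 k.+1 by rewrite mem_index_iota ltnSn.
rewrite (bigD1_seq _ kin (iota_uniq _ _)) /= dvdnn divnn k0 eqxx mulr1.
rewrite big1 ?addr0 // => e ne.
case ek: (e %| k)%N => //.
case: eqP; rewrite ?mulr0 // => h.
by move: ne; rewrite -(divnK ek) h mul1n eqxx.
Qed.

Section Faulhaber.
Variable R : numFieldType.
Variable b : nat -> R.
Hypothesis hb : forall M, \sum_(k < M) 'C(M, k)%:R * b k = (M == 1%N)%:R.

Lemma sum_trunc M n (G : nat -> R) : (M <= n)%N ->
  \sum_(0 <= j < n.+1) 'C(M, j)%:R * G j = \sum_(0 <= j < M.+1) 'C(M, j)%:R * G j.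
Proof.
move=> Mn; rewrite (@big_cat_nat _ _ _ M.+1 0 n.+1) //= [X in _ + X]big_nat_cond.
rewrite [X in _ + X]big1 ?addr0 // => j /andP[/andP[h _] _].
by rewrite bin_small // mul0r.
Qed.

Lemma hb' M : \sum_(0 <= m < M.+1) 'C(M, m)%:R * b m = b M + (M == 1%N)%:R.
Proof.
by rewrite big_nat_recr //= binn mul1r addrC big_mkord hb.
Qed.

Definition Bp n x := \sum_(0 <= m < n.+1) 'C(n, m)%:R * b m * x ^+ (n - m).

Lemma Bp_shift n x : Bp n (x + 1) = Bp n x + \sum_(0 <= j < n.+1) 'C(n, j)%:R * x ^+ j * ((n - j)%N == 1%N)%:R.
Proof.
rewrite /Bp.
have step : forall m, (0 <= m < n.+1)%N -> 'C(n, m)%:R * b m * (x + 1) ^+ (n - m) =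
   \sum_(0 <= j < n.+1) 'C(n, m)%:R * b m * ('C(n - m, j)%:R * x ^+ j).
  move=> m /andP[_ mn]; rewrite -big_distrr /=; congr (_ * _).
  rewrite exprD1n -(big_mkord xpredT (fun i => x ^+ i *+ 'C(n - m, i))).
  rewrite (@sum_trunc (n - m)%N n (fun j => x ^+ j)); last by lia.
  by apply: eq_bigr => i _; rewrite mulr_natl.
rewrite (eq_big_nat _ _ step) exchange_big /=.
have step2 : forall j, (0 <= j < n.+1)%N ->
  \sum_(0 <= m < n.+1) 'C(n, m)%:R * b m * ('C(n - m, j)%:R * x ^+ j) =
  'C(n, j)%:R * x ^+ j * (b (n - j)%N + ((n - j)%N == 1%N)%:R).
  move=> j /andP[_ jn].
  rewrite -hb'.
  rewrite -(@sum_trunc (n - j)%N n b); last by lia.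
  rewrite big_distrr /=; apply: eq_bigr => m _.
  have := @bin_swap n m j jn.
  move=> /(congr1 (fun z : nat => z%:R : R)); rewrite !natrM => e.
  transitivity (('C(n, m)%:R * 'C(n - m, j)%:R) * b m * x ^+ j); first ring.
  rewrite e; ring.
rewrite (eq_big_nat _ _ step2).
rewrite [X in _ = X + _](_ : _ = \sum_(0 <= j < n.+1) 'C(n, j)%:R * x ^+ j * b (n - j)%N).
  by rewrite -big_split /=; apply: eq_bigr => j _; rewrite mulrDr.
rewrite big_nat_rev /=; apply: eq_big_nat => j /andP[_ jn].
have jn' : (j <= n)%N by []. rewrite add0n subSS bin_sub // subKn //.
ring.
Qed.


Lemma Bp_diff n x : Bp n.+1 (x + 1) - Bp n.+1 x = n.+1%:R * x ^+ n.
Proof.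
rewrite Bp_shift addrC addKr.
have nin : n \in index_iota 0 n.+2 by rewrite mem_index_iota /= ltnW.
rewrite (bigD1_seq _ nin (iota_uniq _ _)) /= subSn // subnn eqxx binSn mulr1.
rewrite big1 ?addr0; first by rewrite mulrC.
move=> j /eqP jn; case: eqP => h; last by rewrite mulr0.
exfalso; lia.
Qed.

Lemma even_sum (F : nat -> R) n :
  \sum_(0 <= m < n.*2 | ~~ odd m) F m = \sum_(0 <= m < n) F (2 * m)%N.
Proof.
rewrite big_mkcond /=.
elim: n => [|n IH]; first by rewrite !big_geq.
rewrite doubleS !big_nat_recr //= IH /= odd_double /= addr0.
by rewrite -muln2 mulnC.
Qed.


Definition G n x := \sum_(0 <= m < n) 'C(n, m)%:R * b m * x ^+ (n - m).

Lemma G_Bp n x : G n x = Bp n x - b n.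
Proof. by rewrite /Bp big_nat_recr //= binn subnn expr0 mulr1 mul1r addrK. Qed.

Lemma G_diff r x : G r.+1 (x + 1) - G r.+1 x = r.+1%:R * x ^+ r.
Proof. by rewrite !G_Bp opprB addrA addrNK Bp_diff. Qed.

Lemma G0 n : G n 0 = 0.
Proof.
rewrite /G big_nat_cond big1 // => m /andP[/andP[_ mn] _].
by rewrite expr0n subn_eq0 leqNgt mn /= mulr0.
Qed.

Lemma G_pos r N : G r.+1 N%:R = r.+1%:R * \sum_(0 <= t < N) t%:R ^+ r.
Proof.
elim: N => [|N IH]; first by rewrite big_geq // mulr0 G0.
have := G_diff r N%:R; rewrite natr1 IH big_nat_recr //= => /eqP.
rewrite subr_eq => /eqP ->; ring.
Qed.

Lemma G_neg r N : (0 < r)%N ->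
  G r.+1 (- N%:R) = - (r.+1%:R * (-1) ^+ r * \sum_(0 <= t < N.+1) t%:R ^+ r).
Proof.
move=> r0; elim: N => [|N IH].
  by rewrite oppr0 G0 big_nat1 expr0n eqn0Ngt r0 /= mulr0 oppr0.
have := G_diff r (- N.+1%:R).
rewrite -natr1 opprD addrNK IH => h.
have -> : G r.+1 (- N%:R - 1) = - (r.+1%:R * (-1) ^+ r * \sum_(0 <= t < N.+1) t%:R ^+ r) - r.+1%:R * (- N%:R - 1) ^+ r.
  by rewrite -h; ring.
rewrite (big_nat_recr N.+1) //= -(opprD (N%:R) 1) natr1 (exprNn (N.+1%:R : R)); ring.
Qed.

Lemma G_split n x : G n x =
  \sum_(0 <= m < n | ~~ odd m) 'C(n, m)%:R * b m * x ^+ (n - m) +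
  \sum_(0 <= m < n | odd m) 'C(n, m)%:R * b m * x ^+ (n - m).
Proof. by rewrite /G (bigID (fun m => odd m)) /= addrC. Qed.

Lemma sumE_neg n x :
  \sum_(0 <= m < n | ~~ odd m) 'C(n, m)%:R * b m * (- x) ^+ (n - m) =
  (-1) ^+ n * \sum_(0 <= m < n | ~~ odd m) 'C(n, m)%:R * b m * x ^+ (n - m).
Proof.
rewrite big_distrr /= big_nat_cond [RHS]big_nat_cond.
apply: eq_bigr => m /andP[/andP[_ mn] om].
rewrite exprNn -signr_odd oddB ?(ltnW mn) // (negbTE om) addbF signr_odd; ring.
Qed.

Lemma sumO_neg n x :
  \sum_(0 <= m < n | odd m) 'C(n, m)%:R * b m * (- x) ^+ (n - m) =
  - (-1) ^+ n * \sum_(0 <= m < n | odd m) 'C(n, m)%:R * b m * x ^+ (n - m).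
Proof.
rewrite big_distrr /= big_nat_cond [RHS]big_nat_cond.
apply: eq_bigr => m /andP[/andP[_ mn] om].
rewrite exprNn -signr_odd oddB ?(ltnW mn) // om addbT signrN signr_odd; ring.
Qed.

Lemma faulhaber r N : (0 < r)%N ->
  \sum_(0 <= t < N.+1) t%:R ^+ r =
  N%:R ^+ r / 2 + (r.+1%:R)^-1 *
    \sum_(0 <= m < r./2.+1) 'C(r.+1, 2 * m)%:R * b (2 * m)%N * N%:R ^+ (r.+1 - 2 * m).
Proof.
move=> r0.
set S := \sum_(0 <= t < N.+1) t%:R ^+ r.
set E := \sum_(0 <= m < r.+1 | ~~ odd m) 'C(r.+1, m)%:R * b m * (N%:R : R) ^+ (r.+1 - m).
set O := \sum_(0 <= m < r.+1 | odd m) 'C(r.+1, m)%:R * b m * (N%:R : R) ^+ (r.+1 - m).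
have h1 : E + O = r.+1%:R * S - r.+1%:R * N%:R ^+ r.
  by rewrite -G_split G_pos /S big_nat_recr //= mulrDr addrK.
have h2 : - (-1) ^+ r * E + (-1) ^+ r * O = - (r.+1%:R * (-1) ^+ r * S).
  rewrite -G_neg // G_split sumE_neg sumO_neg exprS -/E -/O; ring.
have s2 : ((-1) ^+ r : R) * (-1) ^+ r = 1 by rewrite -expr2 sqrr_sign.
have h2' : - E + O = - (r.+1%:R * S).
  transitivity ((-1) ^+ r * ((-1) ^+ r) * (- E + O)); first by rewrite s2 mul1r.
  transitivity ((-1) ^+ r * (- (-1) ^+ r * E + (-1) ^+ r * O)); first ring.
  rewrite h2.
  transitivity ((-1) ^+ r * ((-1) ^+ r) * (- (r.+1%:R * S))); first ring.
  by rewrite s2 mul1r.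
have n0 : (r.+1%:R : R) != 0 by rewrite pnatr_eq0.
have t0 : (2 : R) != 0 by rewrite pnatr_eq0.
have hE : E = ((r.+1%:R * S - r.+1%:R * N%:R ^+ r) - (- (r.+1%:R * S))) / 2.
  by rewrite -h1 -h2'; field.
apply: (@eq_trans _ _ (N%:R ^+ r / 2 + (r.+1%:R)^-1 * E)).
  by rewrite hE; field; rewrite -mulrS pnatr_eq0.
suff hh : E = \sum_(0 <= m < r./2.+1) 'C(r.+1, 2 * m)%:R * b (2 * m)%N * N%:R ^+ (r.+1 - 2 * m) by rewrite hh.
rewrite /E -(even_sum (fun m => 'C(r.+1, m)%:R * b m * (N%:R : R) ^+ (r.+1 - m))).
have [or|er] := boolP (odd r).
  have -> : r.+1 = (r./2.+1).*2 by rewrite -[in LHS](odd_double_half r) or doubleS add1n.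
  done.
have e : r = (r./2).*2 by rewrite -[in LHS](odd_double_half r) (negbTE er).
rewrite doubleS -e big_mkcond [RHS]big_mkcond (big_nat_recr r.+1) //=.
by rewrite er addr0.
Qed.

End Faulhaber.

Lemma bern_seq_size n : size (bern_seq n) = n.
Proof. by elim: n => //= n IH; rewrite size_rcons IH. Qed.

Lemma bern_seq_nth n k : (k < n)%N -> nth 0 (bern_seq n) k = bernoulli k.
Proof.
elim: n => // n IH; rewrite ltnS leq_eqVlt => /orP[/eqP ->|kn] //.
by rewrite /= nth_rcons bern_seq_size kn IH.
Qed.

Lemma bernoulli_rec m : bernoulli m =
  if m == 0%N then 1 else - (m.+1%:R)^-1 * \sum_(k < m) ('C(m.+1, k))%:R * bernoulli k.
Proof.
rewrite /bernoulli /= nth_rcons bern_seq_size ltnn eqxx /bern_next bern_seq_size.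
case: eqP => // _; congr (_ * _); apply: eq_bigr => k _.
by rewrite bern_seq_nth.
Qed.

Lemma bern_hb M : \sum_(k < M) 'C(M, k)%:R * bernoulli k = (M == 1%N)%:R.
Proof.
case: M => [|m]; first by rewrite big_ord0.
rewrite big_ord_recr /= binSn.
case: m => [|m]; first by rewrite big_ord0 add0r bernoulli_rec mul1r.
rewrite [bernoulli m.+1]bernoulli_rec /=.
set s := \sum_(i < m.+1) _.
have n0 : (m.+2%:R : rat) != 0 by rewrite pnatr_eq0.
field; by rewrite -natrD pnatr_eq0.
Qed.

Lemma bern_hbR (R : numFieldType) M :
  \sum_(k < M) 'C(M, k)%:R * (ratr (bernoulli k) : R) = (M == 1%N)%:R.
Proof.
have := congr1 (fun q => (ratr q : R)) (bern_hb M) => /=.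
rewrite rmorph_sum rmorph_nat => <-; apply: eq_bigr => k _.
by rewrite rmorphM rmorph_nat.
Qed.

Lemma prod_if (R : comNzRingType) n (c : 'I_n -> bool) (G : 'I_n -> R) :
  \prod_(i < n) (if c i then G i else 0) = if [forall i, c i] then \prod_(i < n) G i else 0.
Proof.
case: forallP => [H|/forallP H].
  by apply: eq_bigr => i _; rewrite H.
move/forallPn: H => [i ci].
by rewrite (bigD1 i) //= (negbTE ci) mul0r.
Qed.

Lemma distr (C : comNzRingType) n K (k : 'I_n -> nat)
  (hk : forall i, (0 < k i)%N) (hK : forall i, (k i <= K)%N)
  (Q : 'I_n -> nat -> bool) (G : 'I_n -> nat -> C) :
  \prod_(i < n) \sum_(d <- divisors (k i) | Q i d) G i d =
  \sum_(d : {ffun 'I_n -> 'I_K.+1} | [forall i, ((d i : nat) %| k i)%N])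
     (if [forall i, Q i (d i)] then \prod_(i < n) G i (d i) else 0).
Proof.
have e i : \sum_(d <- divisors (k i) | Q i d) G i d =
    \sum_(x : 'I_K.+1) (if ((x : nat) %| k i)%N && Q i x then G i x else 0).
  by rewrite (@divisors_sum _ (k i) K.+1) // ?ltnS // big_mkord big_mkcond.
rewrite (eq_bigr _ (fun i _ => e i)) bigA_distr_bigA /= [RHS]big_mkcond /=.
apply: eq_bigr => d _; rewrite prod_if.
have -> : [forall i, ((d i : nat) %| k i)%N && Q i (d i)] =
          [forall i, ((d i : nat) %| k i)%N] && [forall i, Q i (d i)].
  apply/forallP/andP => [H|[/forallP H1 /forallP H2] i].
    by split; apply/forallP => i; case/andP: (H i).
  by rewrite H1 H2.
by case: [forall i, _]; case: [forall i, _].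
Qed.

Lemma sumj (C : numFieldType) q N r (P : C) : (0 < q)%N -> (0 < r)%N ->
  \sum_(1 <= j < (q * N).+1) j%:R ^+ r * (if (q %| j)%N then P else 0) =
  P * (q%:R ^+ r * \sum_(0 <= t < N.+1) t%:R ^+ r).
Proof.
move=> q0 r0.
transitivity (\sum_(0 <= j < (q * N).+1) j%:R ^+ r * (if (q %| j)%N then P else 0)).
  by rewrite [in RHS]big_ltn //= expr0n eqn0Ngt r0 /= mul0r add0r.
have e j : j%:R ^+ r * (if (q %| j)%N then P else 0) = if (q %| j)%N then j%:R ^+ r * P else 0.
  by case: ifP; rewrite ?mulr0.
rewrite (eq_bigr _ (fun j _ => e j)).
rewrite big_nat_recr //= -big_mkcond sum_mult_range // dvdn_mulr //.
rewrite -(big_nat_recr N 0 (fun t => (q * t)%N%:R ^+ r * P)) //.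
rewrite !big_distrr /=; apply: eq_bigr => t _.
rewrite natrM exprMn; ring.
Qed.

Lemma zpow (F : fieldType) (z : F) (a m : nat) : z != 0 ->
  z ^ (a%:Z * (2 * m%:Z - 1)) = (z ^+ a) ^+ (2 * m) / z ^+ a.
Proof.
move=> z0.
have -> : a%:Z * (2 * m%:Z - 1) = (a * (2 * m))%N%:Z + - (a%:Z).
  rewrite !PoszM; ring.
rewrite expfzDr // -exprnN -exprnP exprM.
done.
Qed.

Lemma term_id (F : fieldType) (X Y : F) r m : X != 0 -> Y != 0 -> (2 * m <= r)%N ->
  (X ^+ r)^-1 * (Y ^+ r * (X / Y) ^+ (r.+1 - 2 * m)) =
  (Y ^+ (2 * m) / Y) / (X ^+ (2 * m) / X).
Proof.
move=> X0 Y0 mr.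
set e := (r.+1 - 2 * m)%N.
have hr : r.+1 = (e + 2 * m)%N by rewrite /e subnK // ltnW.
have hX : X ^+ (2 * m) = X ^+ r * X / X ^+ e.
  by rewrite -exprSr hr exprD; field; rewrite expf_neq0.
have hY : Y ^+ (2 * m) = Y ^+ r * Y / Y ^+ e.
  by rewrite -exprSr hr exprD; field; rewrite expf_neq0.
have Xe : X ^+ e != 0 by rewrite expf_neq0.
have Ye : Y ^+ e != 0 by rewrite expf_neq0.
have Xr : X ^+ r != 0 by rewrite expf_neq0.
have Yr : Y ^+ r != 0 by rewrite expf_neq0.
rewrite hX hY expr_div_n; field.
by rewrite Xe Ye Xr X0 Y0.
Qed.

Lemma half_id (F : numFieldType) (X Y : F) r : X != 0 -> Y != 0 ->
  (X ^+ r)^-1 * (Y ^+ r * ((X / Y) ^+ r / 2)) = 2^-1.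
Proof.
move=> X0 Y0.
have Xr : X ^+ r != 0 by rewrite expf_neq0.
have Yr : Y ^+ r != 0 by rewrite expf_neq0.
have t0 : (2 : F) != 0 by rewrite pnatr_eq0.
rewrite expr_div_n; field.
by rewrite Xr Yr.
Qed.

Theorem mainTheorem3 (C : numClosedFieldType) (a n r : nat)
  (k : 'I_n -> nat) (f : 'I_n -> nat -> C)
  (ha : (0 < a)%N) (hn : (0 < n)%N) (hr : (0 < r)%N)
  (hk : forall i, (0 < k i)%N) :
  let K := lcm_fam k in
  ((K ^ (a * r))%N%:R)^-1 *
    \sum_(1 <= j < (K ^ a).+1)
       (j%:R ^+ r * \prod_(i < n)
          \sum_(d <- divisors (k i) | (d ^ a %| j)%N) dconv (f i) (@moebius C) d)
  = 2%:R^-1 * \prod_(i < n) f i (k i)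
    + (r.+1%:R)^-1 *
      \sum_(m < r./2.+1)
        (('C(r.+1, 2 * m))%:R * ratr (bernoulli (2 * m))
          / (K%:R ^ ((a%:Z) * (2 * m%:Z - 1)))
          * \sum_(d : {ffun 'I_n -> 'I_K.+1} | [forall i, ((d i : nat) %| k i)%N])
              ((lcm_fam (fun i => (d i : nat)))%:R ^ ((a%:Z) * (2 * m%:Z - 1))
               * \prod_(i < n) dconv (f i) (@moebius C) (d i))).
Proof.
move=> K.
have hKdvd : forall i, (k i %| K)%N.
  have : (K %| K)%N by [].
  by rewrite {1}/K /lcm_fam => /dvdn_biglcmP H i; apply: H.
have K0 : (0 < K)%N.
  rewrite /K /lcm_fam; apply: (big_ind (fun x => 0 < x)%N) => // x y x0 y0.
  by rewrite lcmn_gt0 x0 y0.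
have hKle : forall i, (k i <= K)%N by move=> i; apply: dvdn_leq.
set PD := fun d : {ffun 'I_n -> 'I_K.+1} => [forall i, ((d i : nat) %| k i)%N].
set L := fun d : {ffun 'I_n -> 'I_K.+1} => lcm_fam (fun i => (d i : nat)).
have hL : forall d, PD d -> (L d %| K)%N.
  move=> d /forallP hd; apply/dvdn_biglcmP => i _.
  exact: dvdn_trans (hd i) (hKdvd i).
have L0 : forall d, PD d -> (0 < L d)%N by move=> d hd; apply: dvdn_gt0 K0 (hL d hd).
set P := fun d : {ffun 'I_n -> 'I_K.+1} => \prod_(i < n) dconv (f i) (@moebius C) (d i).
have eq1 : forall j : nat, \prod_(i < n) \sum_(d <- divisors (k i) | (d ^ a %| j)%N) dconv (f i) (@moebius C) d =
    \sum_(d | PD d) (if (L d ^ a %| j)%N then P d else 0).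
  move=> j; rewrite (@distr C n K k hk hKle (fun i d => (d ^ a %| j)%N) (fun i d => dconv (f i) (@moebius C) d)).
  by apply: eq_bigr => d _; rewrite /L lcm_fam_dvd.
have eqL : \sum_(1 <= j < (K ^ a).+1)
       (j%:R ^+ r * \prod_(i < n)
          \sum_(d <- divisors (k i) | (d ^ a %| j)%N) dconv (f i) (@moebius C) d) =
    \sum_(d | PD d) P d * ((L d ^ a)%:R ^+ r *
        \sum_(0 <= t < (K ^ a %/ L d ^ a).+1) (t%:R : C) ^+ r).
  under eq_bigr => j _ do rewrite eq1 big_distrr /=.
  rewrite exchange_big /=; apply: eq_bigr => d hd.
  set N := (K ^ a %/ L d ^ a)%N.
  have e : (K ^ a = L d ^ a * N)%N by rewrite /N mulnC divnK // dvdn_exp2r // hL.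
  by rewrite e sumj // expn_gt0 L0.
rewrite eqL.
have eqF : \prod_(i < n) f i (k i) = \sum_(d | PD d) P d.
  rewrite (eq_bigr (fun i => \sum_(d <- divisors (k i)) dconv (f i) (@moebius C) d)); last first.
    by move=> i _; rewrite moebius_inv.
  rewrite (@distr C n K k hk hKle (fun _ _ => true) (fun i d => dconv (f i) (@moebius C) d)).
  apply: eq_bigr => d _; rewrite (_ : [forall i, true] = true) //.
  by apply/forallP.
rewrite eqF.
set RHS := (X in _ = X).
have eqR : RHS = \sum_(d | PD d) (2%:R^-1 * P d + \sum_(m < r./2.+1)
     (r.+1%:R)^-1 * (('C(r.+1, 2 * m))%:R * ratr (bernoulli (2 * m))
          / (K%:R ^ ((a%:Z) * (2 * m%:Z - 1))) * ((L d)%:R ^ ((a%:Z) * (2 * m%:Z - 1)) * P d))).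
  rewrite /RHS big_split /= -big_distrr /=; congr (_ + _).
  rewrite exchange_big /= big_distrr /=; apply: eq_bigr => m _.
  by rewrite !big_distrr.
rewrite eqR big_distrr /=.
apply: eq_bigr => d hd.
set N := (K ^ a %/ L d ^ a)%N.
have x0 : (K%:R : C) != 0 by rewrite pnatr_eq0 -lt0n.
have y0 : ((L d)%:R : C) != 0 by rewrite pnatr_eq0 -lt0n L0.
have X0 : (K%:R ^+ a : C) != 0 by rewrite expf_neq0.
have Y0 : ((L d)%:R ^+ a : C) != 0 by rewrite expf_neq0.
have hN : (N%:R : C) = K%:R ^+ a / (L d)%:R ^+ a.
  rewrite /N natr_div ?natrX // ?unitfE ?natrX //.
  by rewrite dvdn_exp2r // hL.
rewrite (@faulhaber C (fun k => ratr (bernoulli k)) (@bern_hbR C) r N hr) big_mkord.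
rewrite hN natrX natrX exprM.
under eq_bigr => m _ do rewrite zpow // zpow //.
set X := (K%:R ^+ a : C).
set Y := ((L d)%:R ^+ a : C).
set c := (r.+1%:R : C)^-1.
set T := \sum_(i < r./2.+1) _.
transitivity (P d * ((X ^+ r)^-1 * (Y ^+ r * ((X / Y) ^+ r / 2))) +
   c * (P d * ((X ^+ r)^-1 * Y ^+ r) * T)); first ring.
rewrite half_id // mulrC; congr (_ + _).
rewrite /T !big_distrr /=; apply: eq_bigr => m _.
have hm : (2 * m <= r)%N.
  have := ltn_ord m; rewrite ltnS => hm.
  have := odd_double_half r; rewrite -muln2; lia.
transitivity (c * ('C(r.+1, 2 * m)%:R * ratr (bernoulli (2 * m)) * P d *
   ((X ^+ r)^-1 * (Y ^+ r * (X / Y) ^+ (r.+1 - 2 * m))))); first ring.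
rewrite term_id //; ring.
Qed.
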